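(* Let $n\ge2$, $p\in(0,1)$, $r:=p^2+(1-p)^2$, and let $R$ be any fixed set of $k$ vertices of $\{1,\dots,n\}$ with $k\ge\frac{-3\ln n}{\ln r}$. Then $R$ is a resolving set of $G_{n,p}$ with probability at least $1-\frac{1}{2n}$. In particular, $\beta(G_{n,p})\le\big\lceil\frac{-3\ln n}{\ln r}\big\rceil$ with probability tending to $1$ as $n\to\infty$.
   Context: $G_{n,p}$ is the Erdős–Rényi random graph on vertex set $\{1,\dots,n\}$ in which each pair of distinct vertices is adjacent independently with probability $p$. A set $R$ of vertices of a graph $G$ is resolving if for all distinct vertices $u,v$ there is $w\in R$ with $d(u,w)\ne d(v,w)$, where $d$ is shortest-path distance ($\infty$ between different components). $\beta(G)$ is the minimum size of a resolving set. *)

(* Defs.v *)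
From mathcomp Require Import all_boot.
From Stdlib Require Import Reals ZArith.
Set Implicit Arguments. Unset Strict Implicit. Unset Printing Implicit Defensive.

(* Potential edges of a simple graph on vertex set 'I_n: pairs (i,j) with i<j. *)
Definition pairs (n : nat) := {x : 'I_n * 'I_n | x.1 < x.2}.

Definition graph (n : nat) := {set pairs n}.

Definition adj n (E : graph n) : rel 'I_n :=
  fun u v => [exists e in E, (val e == (u, v)) || (val e == (v, u))].

Definition walk n (E : graph n) (u v : 'I_n) (m : nat) : bool :=
  [exists s : m.-tuple 'I_n, path (adj E) u s && (last u s == v)].

(* shortest-path distance: Some d, or None (= infinity) for different components.
   A shortest walk is a path, so it has length < n. *)
Definition dist n (E : graph n) (u v : 'I_n) : option nat :=
  let m := find (fun m => walk E u v m) (iota 0 n) in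
  if m < n then Some m else None.

Definition resolving n (E : graph n) (R : {set 'I_n}) : bool :=
  [forall u, forall v, (u != v) ==> [exists w in R, dist E u w != dist E v w]].

(* metric dimension: minimum size of a resolving set (the full vertex set is resolving) *)
Definition beta n (E : graph n) : nat :=
  #|[arg min_(S < [set: 'I_n] | resolving E S) #|S|]|.

Definition gnp_weight n (p : R) (E : graph n) : R :=
  (p ^ #|E| * (1 - p) ^ (#|[set: pairs n]| - #|E|))%R.

Definition gnp_prob n (p : R) (A : pred (graph n)) : R :=
  foldr Rplus 0%R
    (map (fun E => if A E then gnp_weight p E else 0%R) (enum [set: graph n])).

Definition Rceil (x : R) : Z := (- Int_part (- x))%Z.

(* Main.v *)
Require Import Defs.
From mathcomp Require Import all_boot all_order all_algebra.
From mathcomp Require Import Rstruct ring.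
From Stdlib Require Import Reals ZArith Lra Lia.
Import GRing.Theory Num.Theory Order.TTheory.

Section Gen.
Local Open Scope ring_scope.
Variable T : finType.
Variable p : R.
Definition cw (b : bool) : R := if b then p else 1 - p.
Definition wt (E : {set T}) : R := \prod_(t : T) cw (t \in E).
Definition ind (b : bool) : R := if b then 1 else 0.

Lemma inFinSet (f : {ffun T -> bool}) x : (x \in (FinSet f : {set T})) = f x.
Proof. by rewrite /in_mem /= unlock. Qed.

Lemma total_mass : \sum_(E : {set T}) wt E = 1.
Proof.
have -> : \sum_(E : {set T}) wt E = \sum_(f : {ffun T -> bool}) \prod_(t : T) cw (f t).
  rewrite (reindex (fun f : {ffun T -> bool} => FinSet f)) /=; last first.
    exists (fun A : {set T} => [ffun x => x \in A] : {ffun T -> bool}); first move=> f _.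
      by apply/ffunP => x; rewrite ffunE inFinSet.
    by move=> A _; apply/setP => x; rewrite inFinSet ffunE.
  by apply: eq_bigr => f _; rewrite /wt; apply: eq_bigr => t _; rewrite inFinSet.
rewrite -(bigA_distr_bigA (fun (t : T) (b : bool) => cw b)) /=.
rewrite big1 // => t _.
by rewrite big_bool /cw /= addrC subrK.
Qed.

Definition wr (a : T) (E : {set T}) : R := \prod_(t | t != a) cw (t \in E).

Lemma wt_split a E : wt E = cw (a \in E) * wr a E.
Proof. by rewrite /wt (bigD1 a). Qed.

Lemma wr_U a E : wr a (a |: E) = wr a E.
Proof. by apply: eq_bigr => t ta; rewrite in_setU1 (negbTE ta). Qed.

Lemma wr_D a E : wr a (E :\ a) = wr a E.
Proof. by apply: eq_bigr => t ta; rewrite in_setD1 ta. Qed.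

Lemma setU1_id' (a : T) (E : {set T}) : a \in E -> a |: E = E.
Proof. by move=> aE; apply/setP => x; rewrite in_setU1; case: eqP => // ->. Qed.

Lemma setD1_id' (a : T) (E : {set T}) : a \notin E -> E :\ a = E.
Proof. by move=> aE; apply/setP => x; rewrite in_setD1; case: eqP => // ->; rewrite (negbTE aE). Qed.

Definition tog (a : T) (E : {set T}) := if a \in E then E :\ a else a |: E.

Lemma togK a : involutive (tog a).
Proof.
move=> E; rewrite /tog; case: (boolP (a \in E)) => aE.
  by rewrite in_setD1 eqxx /= setD1K.
by rewrite setU11 setU1K.
Qed.

Lemma toggle (a : T) (g : {set T} -> R) :
  \sum_(E : {set T} | a \notin E) g (a |: E) = \sum_(E : {set T} | a \in E) g E.
Proof.
rewrite [RHS](reindex_inj (inv_inj (togK a))) /=.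
rewrite [LHS]big_mkcond [RHS]big_mkcond; apply: eq_bigr => E _.
rewrite /tog; case: (boolP (a \in E)) => aE /=.
  by rewrite in_setD1 eqxx.
by rewrite setU11.
Qed.

Lemma toggleD (a : T) (g : {set T} -> R) :
  \sum_(E : {set T} | a \in E) g (E :\ a) = \sum_(E : {set T} | a \notin E) g E.
Proof.
rewrite -(toggle a (fun E => g (E :\ a))).
by apply: eq_bigr => E aE; rewrite setU1K.
Qed.

Lemma cond (a : T) (f : {set T} -> R) :
  \sum_(E : {set T}) wt E * f E = p * \sum_(E : {set T}) wt E * f (a |: E) + (1 - p) * \sum_(E : {set T}) wt E * f (E :\ a).
Proof.
set S1 := \sum_(E : {set T} | a \in E) wr a E * f E.
set S0 := \sum_(E : {set T} | a \notin E) wr a E * f E.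
have -> : \sum_(E : {set T}) wt E * f E = p * S1 + (1 - p) * S0.
  rewrite (bigID (fun E : {set T} => a \in E)) /= !mulr_sumr; congr (_ + _);
    apply: eq_bigr => E aE; rewrite (wt_split a) /cw ?aE ?(negbTE aE) mulrA //.
have -> : \sum_(E : {set T}) wt E * f (a |: E) = S1.
  rewrite (bigID (fun E : {set T} => a \in E)) /=.
  have -> : \sum_(E : {set T} | a \notin E) wt E * f (a |: E) = (1 - p) * S1.
    rewrite /S1 -toggle mulr_sumr; apply: eq_bigr => E aE.
    by rewrite (wt_split a) /cw (negbTE aE) wr_U mulrA.
  have -> : \sum_(E : {set T} | a \in E) wt E * f (a |: E) = p * S1.
    rewrite /S1 mulr_sumr; apply: eq_bigr => E aE.
    by rewrite (wt_split a) /cw aE setU1_id' // mulrA.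
  by rewrite -mulrDl addrC subrK mul1r.
have -> : \sum_(E : {set T}) wt E * f (E :\ a) = S0.
  rewrite (bigID (fun E : {set T} => a \in E)) /=.
  have -> : \sum_(E : {set T} | a \in E) wt E * f (E :\ a) = p * S0.
    rewrite /S0 -toggleD mulr_sumr; apply: eq_bigr => E aE.
    by rewrite (wt_split a) /cw aE wr_D mulrA.
  have -> : \sum_(E : {set T} | a \notin E) wt E * f (E :\ a) = (1 - p) * S0.
    rewrite /S0 mulr_sumr; apply: eq_bigr => E aE.
    by rewrite (wt_split a) /cw (negbTE aE) setD1_id' // mulrA.
  by rewrite -mulrDl addrC subrK mul1r.
by [].
Qed.

Lemma cond2 (a b : T) (g : {set T} -> R) : a != b ->
  (forall E, g (a |: E) = g E) -> (forall E, g (E :\ a) = g E) ->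
  (forall E, g (b |: E) = g E) -> (forall E, g (E :\ b) = g E) ->
  \sum_(E : {set T}) wt E * (g E * ind ((a \in E) == (b \in E))) =
  (p ^+ 2 + (1 - p) ^+ 2) * \sum_(E : {set T}) wt E * g E.
Proof.
move=> ab gaU gaD gbU gbD.
have ba : b != a by rewrite eq_sym.
have h1 : \sum_(E : {set T}) wt E * (g E * ind (b \in E)) = p * \sum_(E : {set T}) wt E * g E.
  rewrite (cond b).
  rewrite (eq_bigr (fun E => wt E * g E)); last by move=> E _; rewrite setU11 gbU /ind mulr1.
  rewrite [X in _ + (1 - p) * X](eq_bigr (fun E => 0)); last by move=> E _; rewrite in_setD1 eqxx /ind mulr0 mulr0.
  by rewrite big1_eq mulr0 addr0.
have h0 : \sum_(E : {set T}) wt E * (g E * ind (b \notin E)) = (1 - p) * \sum_(E : {set T}) wt E * g E.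
  rewrite (cond b).
  rewrite [X in p * X](eq_bigr (fun E => 0)); last by move=> E _; rewrite setU11 /ind mulr0 mulr0.
  rewrite [X in _ + (1 - p) * X](eq_bigr (fun E => wt E * g E)); last by move=> E _; rewrite in_setD1 eqxx gbD /ind mulr1.
  by rewrite big1_eq mulr0 add0r.
rewrite (cond a).
rewrite (eq_bigr (fun E => wt E * (g E * ind (b \in E)))); last first.
  by move=> E _; rewrite setU11 in_setU1 (negbTE ba) /= gaU.
rewrite [X in _ + (1 - p) * X](eq_bigr (fun E => wt E * (g E * ind (b \notin E)))); last first.
  move=> E _; rewrite in_setD1 eqxx in_setD1 ba /= gaD.
  by case: (b \in E).
by rewrite h1 h0 !mulrA -mulrDl !expr2.
Qed.
End Gen.
Section Graph.
Context {n : nat}.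
Implicit Types (E : graph n) (x y u v w : 'I_n).

Lemma adjC E x y : adj E x y = adj E y x.
Proof. by apply: eq_existsb => e; rewrite orbC. Qed.

Lemma edge_lt x y : x < y -> exists e : pairs n, val e = (x, y) /\ forall E, adj E x y = (e \in E).
Proof.
move=> xy; exists (exist _ (x, y) xy); split => // E.
apply/existsP/idP => [[e' /andP [e'E /orP [/eqP h | /eqP h]]] | eE].
- by have <- : e' = exist _ (x, y) xy by apply: val_inj.
- by move: (valP e'); rewrite h /= ltnNge (ltnW xy).
- by exists (exist _ (x, y) xy); rewrite eE eqxx.
Qed.

Lemma edge_ex x y : x != y -> exists e : pairs n,
  (val e = (x, y) \/ val e = (y, x)) /\ forall E, adj E x y = (e \in E).
Proof.
case: (ltngtP x y) => [xy|yx|/val_inj ->]; last by rewrite eqxx.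
- by have [e [h1 h2]] := @edge_lt _ _ xy; exists e; split; [left|].
- have [e [h1 h2]] := @edge_lt _ _ yx; exists e; split; [by right|].
  by move=> E; rewrite adjC.
Qed.

Lemma adj_U (e : pairs n) E x y : val e != (x, y) -> val e != (y, x) ->
  adj (e |: E) x y = adj E x y.
Proof.
move=> h1 h2; rewrite /adj; apply: eq_existsb => e'; rewrite in_setU1.
by case: eqP => [->|//]; rewrite (negbTE h1) (negbTE h2) /= andbF.
Qed.

Lemma adj_D (e : pairs n) E x y : val e != (x, y) -> val e != (y, x) ->
  adj (E :\ e) x y = adj E x y.
Proof.
move=> h1 h2; rewrite /adj; apply: eq_existsb => e'; rewrite in_setD1.
by case: eqP => [->|//]; rewrite (negbTE h1) (negbTE h2) /= andbF.
Qed.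

Lemma pair_ne (e : pairs n) w u x y : (val e = (w, u) \/ val e = (u, w)) ->
  x != w -> x != u -> val e != (x, y) /\ val e != (y, x).
Proof.
move=> h xw xu; split; apply/eqP => h';
  by case: h => h; move: h'; rewrite h => -[] *; subst; rewrite ?eqxx in xw xu.
Qed.

Lemma walk0 E x y : walk E x y 0 = (x == y).
Proof.
apply/existsP/idP => [[s /andP [_ /eqP <-]]|/eqP ->].
  by rewrite tuple0.
by exists [tuple]; rewrite /= eqxx.
Qed.

Lemma walk1 E x y : walk E x y 1 = adj E x y.
Proof.
apply/existsP/idP => [[s]|h].
  case: s => -[|z [|]] //= _ /andP [/andP [h _] /eqP <-]; exact: h.
by exists [tuple y]; rewrite /= h eqxx.
Qed.

Lemma iota02 m : 2 <= m -> iota 0 m = [:: 0, 1 & iota 2 (m - 2)].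
Proof. by case: m => [|[|m]] //= _; rewrite subn2. Qed.

Lemma iota01 m : 0 < m -> iota 0 m = 0 :: iota 1 m.-1.
Proof. by case: m. Qed.

Lemma dist_self E x : Defs.dist E x x = Some 0.
Proof.
rewrite /Defs.dist iota01 ?(leq_ltn_trans (leq0n x) (ltn_ord x)) //= walk0 eqxx /=.
by rewrite (leq_ltn_trans (leq0n x) (ltn_ord x)).
Qed.

Lemma dist_ne0 E x y : x != y -> Defs.dist E x y != Some 0.
Proof.
move=> xy; rewrite /Defs.dist iota01 ?(leq_ltn_trans (leq0n x) (ltn_ord x)) //= walk0 (negbTE xy).
by case: ifP.
Qed.

Lemma dist_1 E x y : (2 <= n)%nat -> x != y -> adj E x y -> Defs.dist E x y = Some 1.
Proof.
move=> n2 xy h; rewrite /Defs.dist iota02 //= walk0 (negbTE xy) walk1 h /=.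
by rewrite n2.
Qed.

Lemma dist_not1 E x y : (2 <= n)%nat -> x != y -> ~~ adj E x y -> Defs.dist E x y != Some 1.
Proof.
move=> n2 xy h; rewrite /Defs.dist iota02 //= walk0 (negbTE xy) walk1 (negbTE h) /=.
by case: ifP.
Qed.


Definition unres E (Rs : {set 'I_n}) u v :=
  [forall w in Rs, Defs.dist E u w == Defs.dist E v w].

Lemma not_res E (Rs : {set 'I_n}) : ~~ resolving E Rs -> exists u v, (u < v) && unres E Rs u v.
Proof.
move/forallPn => [u /forallPn [v]]; rewrite negb_imply => /andP [uv /existsPn H].
have H' : forall w, w \in Rs -> Defs.dist E u w = Defs.dist E v w.
  by move=> w wR; move: (H w); rewrite wR /= negbK => /eqP.
case: (ltngtP u v) => [lt|gt|/val_inj e]; last by rewrite e eqxx in uv.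
- exists u, v; rewrite lt /=; apply/forall_inP => w wR; rewrite H' //.
- exists v, u; rewrite gt /=; apply/forall_inP => w wR; rewrite H' //.
Qed.

Lemma unres_inR E (Rs : {set 'I_n}) u v : u != v -> (u \in Rs) || (v \in Rs) -> unres E Rs u v = false.
Proof.
move=> uv /orP [uR|vR]; apply/negbTE/forall_inPn.
- by exists u; rewrite // dist_self eq_sym; apply: dist_ne0; rewrite eq_sym.
- by exists v; rewrite // dist_self; apply: dist_ne0.
Qed.

Definition Aev (W : {set 'I_n}) u v E := [forall w in W, adj E w u == adj E w v].

Lemma unres_A E (Rs : {set 'I_n}) u v : (2 <= n)%nat -> u \notin Rs -> v \notin Rs ->
  unres E Rs u v -> Aev Rs u v E.
Proof.
move=> n2 uR vR /forall_inP H; apply/forall_inP => w wR.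
have uw : u != w by apply: contraNneq uR => ->.
have vw : v != w by apply: contraNneq vR => ->.
move: (H w wR); rewrite (adjC E w u) (adjC E w v).
case: (boolP (adj E u w)) => hu; case: (boolP (adj E v w)) => hv //.
- by rewrite (dist_1 E u w n2 uw hu) eq_sym (negbTE (dist_not1 E v w n2 vw hv)).
- by rewrite (dist_1 E v w n2 vw hv) (negbTE (dist_not1 E u w n2 uw hu)).
Qed.

End Graph.

Arguments wt {T} p E.
Arguments cond {T} p a f.
Arguments cond2 {T} p a b g.
Arguments total_mass {T} p.

Local Open Scope ring_scope.
Lemma ind_and (b1 b2 : bool) : ind (b1 && b2) = ind b1 * ind b2.
Proof. by case: b1; case: b2; rewrite /ind /= ?mul1r ?mul0r. Qed.

Section Prob.
Variable n : nat.
Variable p : R.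
Local Open Scope ring_scope.

Lemma Aev_split (W : {set 'I_n}) u v w E : w \in W ->
  Aev W u v E = (adj E w u == adj E w v) && Aev (W :\ w) u v E.
Proof.
move=> wW; apply/forall_inP/andP => [H|[h1 /forall_inP h2] x xW].
  split; first exact: H.
  by apply/forall_inP => x /setD1P [_ xW]; apply: H.
case: (x =P w) => [->//|/eqP xw]; apply: h2; by rewrite in_setD1 xw.
Qed.

Lemma Aev_inv (W : {set 'I_n}) u v w z (e : pairs n) E :
  (val e = (w, z) \/ val e = (z, w)) -> z \notin W -> w \notin W ->
  Aev W u v (e |: E) = Aev W u v E /\ Aev W u v (E :\ e) = Aev W u v E.
Proof.
move=> he zW wW; split; apply: eq_forallb => x; case: (boolP (x \in W)) => xW //=;
  have xw : x != w by apply: contraNneq wW => <-.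
all: have xz : x != z by apply: contraNneq zW => <-.
all: have [h1 h2] := @pair_ne _ e w z x u he xw xz; have [h3 h4] := @pair_ne _ e w z x v he xw xz.
all: by rewrite ?adj_U ?adj_D.
Qed.

Lemma PA (W : {set 'I_n}) u v : u != v -> u \notin W -> v \notin W ->
  \sum_(E : graph n) wt p E * ind (Aev W u v E) = (p ^+ 2 + (1 - p) ^+ 2) ^+ #|W|.
Proof.
move=> uv.
suff H : forall m (W : {set 'I_n}), #|W| = m -> u \notin W -> v \notin W ->
  \sum_(E : graph n) wt p E * ind (Aev W u v E) = (p ^+ 2 + (1 - p) ^+ 2) ^+ m.
  by move=> uW vW; apply: H.
elim=> [|m IH] {}W cW uW vW.
  have -> : W = set0 by apply/eqP; rewrite -cards_eq0 cW.
  rewrite expr0 -(@total_mass (pairs n) p); apply: eq_bigr => E _.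
  have -> : Aev set0 u v E = true by apply/forall_inP => w; rewrite in_set0.
  by rewrite /ind mulr1.
have [w wW] : exists w, w \in W by apply/set0Pn; rewrite -cards_eq0 cW.
set W' := W :\ w.
have cW' : #|W'| = m by move: cW; rewrite (cardsD1 w) wW add1n => -[].
have uW' : u \notin W' by rewrite in_setD1 (negbTE uW) andbF.
have vW' : v \notin W' by rewrite in_setD1 (negbTE vW) andbF.
have wW' : w \notin W' by rewrite in_setD1 eqxx.
have wu : w != u by apply: contraNneq uW => <-.
have wv : w != v by apply: contraNneq vW => <-.
have [a [ha adja]] := edge_ex w u wu.
have [b [hb adjb]] := edge_ex w v wv.
have ab : a != b.
  apply/eqP => eab; have vw : v != w by rewrite eq_sym.
  have vu : v != u by rewrite eq_sym.
  have [h1 h2] := @pair_ne _ a w u v w ha vw vu.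
  by case: hb => hb; rewrite eab hb eqxx in h1 h2.
rewrite (eq_bigr (fun E => wt p E * (ind (Aev W' u v E) * ind ((a \in E) == (b \in E))))); last first.
  by move=> E _; rewrite (Aev_split W u v w E wW) ind_and adja adjb [ind _ * _]mulrC.
apply: eq_trans (cond2 p a b (fun E => ind (Aev W' u v E)) ab _ _ _ _) _.
- by move=> E; have [-> _] := Aev_inv W' u v w u a E ha uW' wW'.
- by move=> E; have [_ ->] := Aev_inv W' u v w u a E ha uW' wW'.
- by move=> E; have [-> _] := Aev_inv W' u v w v b E hb vW' wW'.
- by move=> E; have [_ ->] := Aev_inv W' u v w v b E hb vW' wW'.
by rewrite /= (IH W' cW' uW' vW') -exprS.
Qed.


Hypothesis hp0 : 0 <= p.
Hypothesis hp1 : p <= 1.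
Let r := p ^+ 2 + (1 - p) ^+ 2.

Lemma r_ge0 : 0 <= r.
Proof. by rewrite /r addr_ge0 // sqr_ge0. Qed.

Lemma wt_ge0 (E : graph n) : 0 <= wt p E.
Proof. by apply: prodr_ge0 => t _; rewrite /cw; case: (t \in E); rewrite ?subr_ge0. Qed.

Lemma ind_ge0 b : 0 <= ind b.
Proof. by case: b; rewrite /ind. Qed.

Lemma ind_le (b1 b2 : bool) : (b1 -> b2) -> ind b1 <= ind b2.
Proof. by case: b1; case: b2 => // h; have := h isT. Qed.

Lemma P_unres (Rs : {set 'I_n}) u v : (2 <= n)%nat -> u != v ->
  \sum_(E : graph n) wt p E * ind (unres E Rs u v) <= r ^+ #|Rs|.
Proof.
move=> n2 uv; case: (boolP ((u \in Rs) || (v \in Rs))) => h.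
  rewrite big1 ?exprn_ge0 ?r_ge0 // => E _.
  by rewrite unres_inR // /ind mulr0.
rewrite negb_or in h; case/andP: h => uR vR.
rewrite -(PA Rs u v uv uR vR); apply: ler_sum => E _; apply: ler_wpM2l; first exact: wt_ge0.
by apply: ind_le; apply: unres_A.
Qed.

Lemma ind_not_res (E : graph n) (Rs : {set 'I_n}) :
  ind (~~ resolving E Rs) <= \sum_(u : 'I_n) \sum_(v : 'I_n) ind ((u < v)%nat && unres E Rs u v).
Proof.
case: (boolP (resolving E Rs)) => h /=.
  by apply: sumr_ge0 => u _; apply: sumr_ge0 => v _; apply: ind_ge0.
have [u0 [v0 H]] := not_res E Rs h.
rewrite (bigD1 u0) //= (bigD1 v0) //= H {1}/ind -addrA lerDl.
by rewrite addr_ge0 //; apply: sumr_ge0 => ? _; [apply: ind_ge0|apply: sumr_ge0 => ? _; apply: ind_ge0].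
Qed.

Lemma P_not_res (Rs : {set 'I_n}) : (2 <= n)%nat ->
  \sum_(E : graph n) wt p E * ind (~~ resolving E Rs) <=
  r ^+ #|Rs| * \sum_(u : 'I_n) \sum_(v : 'I_n) ind ((u < v)%nat).
Proof.
move=> n2.
apply: le_trans (_ : \sum_(E : graph n) wt p E *
   (\sum_(u : 'I_n) \sum_(v : 'I_n) ind ((u < v)%nat && unres E Rs u v)) <= _).
  by apply: ler_sum => E _; apply: ler_wpM2l; [apply: wt_ge0|apply: ind_not_res].
rewrite (eq_bigr (fun E => \sum_(u : 'I_n) \sum_(v : 'I_n) wt p E * ind ((u < v)%nat && unres E Rs u v))); last first.
  by move=> E _; rewrite mulr_sumr; apply: eq_bigr => u _; rewrite mulr_sumr.
rewrite exchange_big /= mulr_sumr; apply: ler_sum => u _.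
rewrite exchange_big /= mulr_sumr; apply: ler_sum => v _.
case: (ltnP u v) => uv /=.
  rewrite mulr1; apply: P_unres => //.
  by apply: contraTneq uv => ->; rewrite ltnn.
by rewrite big1 ?mulr0 // => E _; rewrite /ind mulr0.
Qed.

Lemma count_pairs : (\sum_(u : 'I_n) \sum_(v : 'I_n) ind ((u < v)%nat)) * 2%:R <= n%:R * n%:R.
Proof.
set S := \sum_(u : 'I_n) \sum_(v : 'I_n) ind ((u < v)%nat).
have S' : \sum_(u : 'I_n) \sum_(v : 'I_n) ind ((v < u)%nat) = S by rewrite exchange_big.
rewrite mulr_natr mulr2n -{2}S' -big_split /=.
apply: le_trans (_ : \sum_(u : 'I_n) \sum_(v : 'I_n) (1 : R) <= _).
  apply: ler_sum => u _; rewrite -big_split /=; apply: ler_sum => v _.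
  by rewrite /ind; case: ltngtP => //; rewrite ?addr0 ?add0r.
by rewrite sumr_const sumr_const card_ord -mulr_natr mul1r mulr_natr.
Qed.

Lemma P_split (A : pred (graph n)) :
  \sum_(E : graph n) wt p E * ind (A E) + \sum_(E : graph n) wt p E * ind (~~ A E) = 1.
Proof.
rewrite -big_split /= -(@total_mass (pairs n) p); apply: eq_bigr => E _.
by rewrite -mulrDr /ind; case: (A E); rewrite /= ?addr0 ?add0r mulr1.
Qed.

End Prob.

Section Conv.
Local Open Scope ring_scope.

Lemma weightE n p (E : graph n) : gnp_weight p E = wt p E.
Proof.
rewrite /gnp_weight /wt (bigID (fun t => t \in E)) /=.
rewrite (eq_bigr (fun _ => p)); last by move=> t ->.
rewrite [X in _ * X](eq_bigr (fun _ => 1 - p)); last by move=> t /negbTE ->.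
rewrite !prodr_const !RpowE cardsT -(cardC E) addKn.
by [].
Qed.

Lemma gnp_probE n p (A : pred (graph n)) :
  @gnp_prob n p A = \sum_(E : graph n) wt p E * ind (A E).
Proof.
rewrite /gnp_prob foldrE big_map big_enum /=.
rewrite big_mkcond /=.
apply: eq_bigr => E _; rewrite in_setT weightE /ind.
by case: (A E); rewrite ?mulr1 ?mulr0.
Qed.
End Conv.

Lemma resolving_setT n (E : graph n) : resolving E setT.
Proof.
apply/forallP => u; apply/forallP => v; apply/implyP => uv.
apply/existsP; exists u; rewrite in_setT /= dist_self eq_sym.
by apply: dist_ne0; rewrite eq_sym.
Qed.

Lemma beta_le n (E : graph n) (S : {set 'I_n}) : resolving E S -> (beta E <= #|S|)%nat.
Proof.
move=> hS; rewrite /beta; case: arg_minnP => [|S' _ minS]; first exact: resolving_setT.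
exact: minS.
Qed.

Lemma beta_le_n n (E : graph n) : (beta E <= n)%nat.
Proof. by rewrite /beta; apply: leq_trans (max_card _) _; rewrite card_ord. Qed.

Section Defs2.
Local Open Scope ring_scope.
Definition Pr n p (A : pred (graph n)) := \sum_(E : graph n) wt p E * ind (A E).
Definition Scnt n := \sum_(u : 'I_n) \sum_(v : 'I_n) ind ((u < v)%nat).
Definition rring (p : R) k := (p ^+ 2 + (1 - p) ^+ 2) ^+ k.

Lemma rringE p k : rring p k = ((p ^ 2 + (1 - p) ^ 2) ^ k)%R.
Proof. by rewrite /rring !RpowE. Qed.
End Defs2.
Arguments Pr {n} p A.

Lemma Pr_mono n p (A B : pred (graph n)) : (0 <= p <= 1)%R -> (forall E, A E -> B E) ->
  (Pr p A <= Pr p B)%R.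
Proof.
move=> [p0 p1] h; apply/RleP; apply: ler_sum => E _; apply: ler_wpM2l.
  by apply: wt_ge0; apply/RleP.
by apply: ind_le; apply: h.
Qed.

Lemma Pr_le1 n p (A : pred (graph n)) : (0 <= p <= 1)%R -> (Pr p A <= 1)%R.
Proof.
move=> [p0 p1]; have h := P_split n p A.
have : (0 <= Pr p (fun E => ~~ A E))%R.
  apply/RleP; apply: sumr_ge0 => E _; apply: mulr_ge0; last exact: ind_ge0.
  by apply: wt_ge0; apply/RleP.
change (Pr p A + Pr p (fun E => ~~ A E) = 1)%R in h.
lra.
Qed.

Lemma r_bounds p : (0 < p < 1)%R -> (0 < p ^ 2 + (1 - p) ^ 2 < 1)%R.
Proof. move=> [p0 p1]; split; nra. Qed.

Lemma rk_bound n p k : (2 <= n)%nat -> (0 < p < 1)%R ->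
  (- 3 * ln (INR n) / ln (p ^ 2 + (1 - p) ^ 2) <= INR k)%R ->
  ((p ^ 2 + (1 - p) ^ 2) ^ k <= / INR n ^ 3)%R.
Proof.
move=> n2 hp h.
set r := (p ^ 2 + (1 - p) ^ 2)%R in h *.
have [r0 r1] := r_bounds p hp.
have nR : (2 <= INR n)%R by apply: (le_INR 2); apply/ssrnat.leP.
have lnr : (ln r < 0)%R by rewrite -ln_1; apply: ln_increasing.
have lnn : (0 < ln (INR n))%R by rewrite -ln_1; apply: ln_increasing; lra.
have h2 : (ln r * INR k <= - 3 * ln (INR n))%R.
  have := Rmult_le_compat_neg_l (ln r) _ _ (Rlt_le _ _ lnr) h.
  have -> : (ln r * (- 3 * ln (INR n) / ln r) = - 3 * ln (INR n))%R by field; lra.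
  by [].
have rk0 : (0 < r ^ k)%R by apply: pow_lt.
have n30 : (0 < INR n ^ 3)%R by apply: pow_lt; lra.
have e1 : ln (r ^ k) = (INR k * ln r)%R by apply: ln_pow.
have e2 : ln (/ INR n ^ 3) = (- 3 * ln (INR n))%R.
  rewrite ln_Rinv // ln_pow; last lra.
  rewrite /=; lra.
apply: Rnot_lt_le => hlt.
have := ln_increasing _ _ (Rinv_0_lt_compat _ n30) hlt.
rewrite e1 e2; lra.
Qed.

Lemma part1 n p (Rs : {set 'I_n}) : (2 <= n)%nat -> (0 < p < 1)%R ->
  (- 3 * ln (INR n) / ln (p ^ 2 + (1 - p) ^ 2) <= INR #|Rs|)%R ->
  (1 - 1 / (2 * INR n) <= Pr p (fun E => resolving E Rs))%R.
Proof.
move=> n2 hp h.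
have [p0 p1] : (0 <= p /\ p <= 1)%R by lra.
have p0' : (0 <= p)%O by apply/RleP.
have p1' : (p <= 1)%O by apply/RleP.
have H1 : (Pr p (fun E => resolving E Rs) + Pr p (fun E => ~~ resolving E Rs) = 1)%R.
  exact: (P_split n p (fun E => resolving E Rs)).
have H2 : (Pr p (fun E => ~~ resolving E Rs) <= rring p #|Rs| * Scnt n)%R.
  by apply/RleP; exact: (P_not_res n p p0' p1' Rs n2).
have H3 : (Scnt n + Scnt n <= INR n * INR n)%R.
  apply/RleP; rewrite INRE.
  have := @count_pairs n; rewrite mulr_natr mulr2n; exact.
have H4 : (0 <= Scnt n)%R.
  by apply/RleP; apply: sumr_ge0 => u _; apply: sumr_ge0 => v _; apply: ind_ge0.
have H6 := rk_bound n p #|Rs| n2 hp h; rewrite -rringE in H6.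
have nR : (2 <= INR n)%R by apply: (le_INR 2); apply/ssrnat.leP.
have n30 : (0 < INR n ^ 3)%R by apply: pow_lt; lra.
have H7 : (rring p #|Rs| * Scnt n <= / INR n ^ 3 * Scnt n)%R by apply: Rmult_le_compat_r.
have H8 : (/ INR n ^ 3 * Scnt n <= / INR n ^ 3 * (INR n * INR n / 2))%R.
  apply: Rmult_le_compat_l; [apply: Rlt_le; apply: Rinv_0_lt_compat => // | lra].
have E9 : (/ INR n ^ 3 * (INR n * INR n / 2) = 1 / (2 * INR n))%R by field; lra.
lra.
Qed.

Lemma Pr_true n p : Pr (n:=n) p (fun _ => true) = 1%R.
Proof.
apply: (eq_trans _ (@total_mass (pairs n) p)); apply: eq_bigr => E _.
by rewrite /ind mulr1.
Qed.

Lemma part2_bound m p : (2 <= m)%nat -> (0 < p < 1)%R ->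
  (1 - 1 / (2 * INR m) <= @gnp_prob m p (fun E =>
     (Z.of_nat (beta E) <=? Rceil (- 3 * ln (INR m) / ln (p ^ 2 + (1 - p) ^ 2)))%Z))%R.
Proof.
move=> m2 hp; rewrite gnp_probE.
set x := (- 3 * ln (INR m) / ln (p ^ 2 + (1 - p) ^ 2))%R.
have [r0 r1] := r_bounds p hp.
have mR : (2 <= INR m)%R by apply: (le_INR 2); apply/ssrnat.leP.
have lnr : (ln (p ^ 2 + (1 - p) ^ 2) < 0)%R by rewrite -ln_1; apply: ln_increasing.
have lnm : (0 < ln (INR m))%R by rewrite -ln_1; apply: ln_increasing; lra.
have xpos : (0 < x)%R.
  rewrite /x /Rdiv; have := Rinv_lt_0_compat _ lnr; nra.
set c := Rceil x.
have cx : (x <= IZR c)%R.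
  rewrite /c /Rceil opp_IZR; have [hb _] := base_Int_part (- x); lra.
have c0 : (0 < c)%Z by apply: lt_0_IZR; lra.
have [p0 p1] : (0 <= p /\ p <= 1)%R by lra.
case: (Z_le_gt_dec c (Z.of_nat m)) => hc.
- set k := Z.to_nat c.
  have kc : Z.of_nat k = c by rewrite /k Z2Nat.id //; lia.
  have km : (k <= m)%nat by apply/ssrnat.leP; lia.
  set Rs := [set widen_ord km i | i : 'I_k].
  have cRs : #|Rs| = k.
    by rewrite card_imset ?cardsT ?card_ord //; by move=> i j /(congr1 val) /= h; apply: val_inj.
  have hRs : (- 3 * ln (INR m) / ln (p ^ 2 + (1 - p) ^ 2) <= INR #|Rs|)%R.
    by rewrite cRs (INR_IZR_INZ k) kc.
  apply: Rle_trans (part1 m p Rs m2 hp hRs) _.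
  apply: Pr_mono => // E hE.
  apply/Z.leb_le; rewrite -kc; apply: inj_le; apply/ssrnat.leP.
  by rewrite -cRs; apply: beta_le.
- have hB : forall E : graph m, true -> (Z.of_nat (beta E) <=? c)%Z.
    move=> E _; apply/Z.leb_le; have := beta_le_n m E => /ssrnat.leP; lia.
  apply: Rle_trans _ (Pr_mono m p (fun _ => true) _ (conj p0 p1) hB).
  rewrite Pr_true.
  have : (0 < 1 / (2 * INR m))%R by apply: Rdiv_lt_0_compat; lra.
  lra.
Qed.

Theorem corollary4p4 :
  (forall (n : nat) (p : R) (Rs : {set 'I_n}),
     (2 <= n)%nat -> (0 < p < 1)%R ->
     (- 3 * ln (INR n) / ln (p ^ 2 + (1 - p) ^ 2) <= INR #|Rs|)%R ->
     (1 - 1 / (2 * INR n) <= @gnp_prob n p (fun E => resolving E Rs))%R)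
  /\
  (forall p : R, (0 < p < 1)%R ->
     Un_cv (fun n => @gnp_prob n p (fun E =>
              (Z.of_nat (beta E) <=? Rceil (- 3 * ln (INR n) / ln (p ^ 2 + (1 - p) ^ 2)))%Z))
           1%R).
Proof.
split.
  move=> n p Rs n2 hp h; rewrite gnp_probE; exact: part1.
move=> p hp eps heps.
have [p0 p1] : (0 <= p /\ p <= 1)%R by lra.
have [ha _] := archimed (/ eps).
have ie : (0 < / eps)%R by apply: Rinv_0_lt_compat.
have up0 : (0 <= up (/ eps))%Z by apply: le_0_IZR; lra.
exists (Z.to_nat (up (/ eps)) + 2)%nat => m hm.
have m2 : (2 <= m)%nat by apply/ssrnat.leP; lia.
have lo := part2_bound m p m2 hp.
have hi : (@gnp_prob m p (fun E =>
     (Z.of_nat (beta E) <=? Rceil (- 3 * ln (INR m) / ln (p ^ 2 + (1 - p) ^ 2)))%Z) <= 1)%R.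
  rewrite gnp_probE; exact: (Pr_le1 m p _ (conj p0 p1)).
have mge : (IZR (up (/ eps)) <= INR m)%R.
  rewrite -(Z2Nat.id _ up0) -INR_IZR_INZ; apply: le_INR; lia.
have mpos : (0 < INR m)%R by lra.
have hinv : (/ INR m < eps)%R.
  rewrite -(Rinv_inv eps); apply: Rinv_lt_contravar; [apply: Rmult_lt_0_compat => //|lra].
have e1 : (1 / (2 * INR m) = / INR m / 2)%R by field; lra.
rewrite /Rdist Rabs_left1; lra.
Qed.
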